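(* Assume hypotheses (A) and (B) and that $\min_{1\le i\le d}\frac{1}{G_{ii}}(\sqrt{\mu_i}-\sqrt{\nu_i})^2=\frac{1}{G_{11}}(\sqrt{\mu_1}-\sqrt{\nu_1})^2$. Let $\alpha\in\mathcal{B}_{\{1\}}$ with $\{2,\dots,d\}\setminus J(\alpha)\ne\emptyset$. Then for every $i\in\{2,\dots,d\}\setminus J(\alpha)$ there exists $\tilde\alpha\in\mathcal{B}_{\{1\}}$ such that $J(\alpha)\cup\{i\}\subset J(\tilde\alpha)$ and $$R(\tilde\alpha)<\max\Bigl\{R(\alpha),\ -\frac{1}{G_{ii}}\bigl(\sqrt{\mu_i}-\sqrt{\nu_i}\bigr)^2\Bigr\}.$$
   Context: Jackson network with $d$ queues: arrival rates $\lambda_i\ge0$, service rates $\mu_i>0$, routing matrix $P=(p_{ij})_{i,j=1}^d$ nonnegative with $p_{ii}=0$, $\sum_jp_{ij}\le1$, $p_{i0}=1-\sum_jp_{ij}$. Hypothesis (A): the jump-rate kernel on $\mathbb{Z}^d$ (jumps $+\epsilon^i$ at rate $\lambda_i$, $-\epsilon^i$ at rate $\mu_ip_{i0}$, $\epsilon^j-\epsilon^i$ at rate $\mu_ip_{ij}$) is irreducible (equivalently spectral radius of $P$ $<1$ and for every $i$ some $\lambda_jp^{(n)}_{ji}>0$); then the traffic equations $\nu_j=\lambda_j+\sum_i\nu_ip_{ij}$ have a unique solution with $\nu_i>0$. Hypothesis (B): $\nu_i<\mu_i$ for all $i$. $G=(I-P)^{-1}$. For $\alpha\in\mathbb{R}^d$,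 $$R(\alpha)=\sum_{i=1}^d\mu_i\Bigl(\sum_{j=1}^dp_{ij}e^{\alpha^j-\alpha^i}+p_{i0}e^{-\alpha^i}-1\Bigr)+\sum_{i=1}^d\lambda_i(e^{\alpha^i}-1).$$ $\mathcal{B}_{\{1\}}$ is the set of $\alpha\in\mathbb{R}^d$ with $e^{\alpha^k}\le\sum_{j=1}^dp_{kj}e^{\alpha^j}+p_{k0}$ for all $k\ne1$. $J(\alpha)$ is the set of $k\in\{1,\dots,d\}$ with $e^{\alpha^k}=\sum_{j=1}^dp_{kj}e^{\alpha^j}+p_{k0}$. *)

(* Defs.v *)
From HB Require Import structures.
From mathcomp Require Import all_boot all_order all_algebra.
From mathcomp Require Import reals.
From mathcomp Require Import sequences exp.
Set Implicit Arguments. Unset Strict Implicit. Unset Printing Implicit Defensive.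
Import Order.TTheory GRing.Theory Num.Theory.
Local Open Scope ring_scope.

Section Jackson.
Variables (R : realType) (d : nat).
Implicit Types (lam mu nu a : 'I_d -> R) (P : 'M[R]_d).

Definition p0 P (i : 'I_d) : R := 1 - \sum_j P i j.

Definition Gmx P : 'M[R]_d := invmx (1%:M - P).

Definition unitv (i : 'I_d) : 'rV[int]_d := delta_mx 0 i.

Definition is_jump lam mu P (v : 'rV[int]_d) : Prop :=
  (exists i, v = unitv i /\ 0 < lam i) \/
  (exists i, v = - unitv i /\ 0 < mu i * p0 P i) \/
  (exists i j, v = unitv j - unitv i /\ 0 < mu i * P i j).

(* Hypothesis (A): the jump kernel on Z^d is irreducible: any y is reachable
   from any x by a finite path of positive-rate jumps. *)
Definition jackson_irreducible lam mu P : Prop :=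
  forall x y : 'rV[int]_d, exists s : seq 'rV[int]_d,
    (forall v, v \in s -> is_jump lam mu P v) /\ y = x + \sum_(v <- s) v.

Definition Rfun lam mu P a : R :=
  \sum_i mu i * (\sum_j P i j * expR (a j - a i) + p0 P i * expR (- a i) - 1)
  + \sum_i lam i * (expR (a i) - 1).

Definition Bset P (k1 : 'I_d) a : Prop :=
  forall k, k != k1 -> expR (a k) <= \sum_j P k j * expR (a j) + p0 P k.

Definition Jset P a (k : 'I_d) : Prop :=
  expR (a k) = \sum_j P k j * expR (a j) + p0 P k.

Definition gap mu nu P (i : 'I_d) : R :=
  (Num.sqrt (mu i) - Num.sqrt (nu i)) ^+ 2 / Gmx P i i.

End Jackson.

(* Main.v *)
Require Import Defs.
From HB Require Import structures.
From mathcomp Require Import all_boot all_order all_algebra.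
From mathcomp Require Import reals.
From mathcomp Require Import sequences exp.
From mathcomp Require Import ring lra.
Import Order.TTheory GRing.Theory Num.Theory.
Local Open Scope ring_scope.

Section Irr.
Variables (R : realType) (d : nat) (lam mu : 'I_d -> R) (P : 'M[R]_d).
Hypothesis hA : jackson_irreducible lam mu P.

Definition fpsi (psi : 'I_d -> R) (v : 'rV[int]_d) : R :=
  \sum_j psi j * (v 0 j)%:~R.

Lemma fpsiD psi x y : fpsi psi (x + y) = fpsi psi x + fpsi psi y.
Proof.
rewrite /fpsi -big_split /=; apply: eq_bigr => j _.
by rewrite mxE intrD mulrDr.
Qed.

Lemma fpsi0 psi : fpsi psi 0 = 0.
Proof. by rewrite /fpsi big1 // => j _; rewrite mxE mulr0. Qed.

Lemma fpsiN psi x : fpsi psi (- x) = - fpsi psi x.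
Proof.
rewrite /fpsi -sumrN; apply: eq_bigr => j _.
by rewrite mxE intrN mulrN.
Qed.

Lemma fpsi_sum psi (s : seq 'rV[int]_d) :
  fpsi psi (\sum_(v <- s) v) = \sum_(v <- s) fpsi psi v.
Proof.
elim: s => [|v s IH]; first by rewrite !big_nil fpsi0.
by rewrite !big_cons fpsiD IH.
Qed.

Lemma fpsi_unit psi k : fpsi psi (unitv k) = psi k.
Proof.
rewrite /fpsi (bigD1 k) //= big1 => [|j hj]; first by rewrite mxE !eqxx mulr1 addr0.
by rewrite mxE eqxx /= (negbTE hj) mulr0.
Qed.

Lemma irr_psi (psi : 'I_d -> R) :
  (forall v, is_jump lam mu P v -> 0 <= fpsi psi v) -> forall k, psi k = 0.
Proof.
move=> hj k.
have pos s : (forall v, v \in s -> is_jump lam mu P v) -> 0 <= \sum_(v <- s) fpsi psi v.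
  move=> hs; rewrite big_seq; apply: sumr_ge0 => v /hs; exact: hj.
have [s1 [hs1 e1]] := hA 0 (unitv k).
have [s2 [hs2 e2]] := hA (unitv k) 0.
have := congr1 (fpsi psi) e1; rewrite add0r fpsi_sum fpsi_unit => E1.
have := congr1 (fpsi psi) e2; rewrite fpsiD fpsi_sum fpsi_unit fpsi0 => E2.
have := pos _ hs1; have := pos _ hs2; rewrite -E1.
move=> h2 h1; apply/eqP; rewrite eq_le h1 andbT.
move: h2 E2; lra.
Qed.

Hypotheses (hmu : forall i, 0 < mu i) (hPpos : forall i j, 0 <= P i j)
  (hProw : forall i, \sum_j P i j <= 1).

Lemma p0E i : p0 P i = 1 - \sum_j P i j. Proof. by []. Qed.

Lemma minp (T : pred 'I_d) (z : 'I_d -> R) :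
  (forall j, T j -> 0 <= z j) ->
  (forall k, ~~ T k -> \sum_j P k j * z j <= z k) -> forall k, 0 <= z k.
Proof.
move=> hT hk k; rewrite leNgt; apply/negP => zk.
set m0 := [arg min_(i < k) z i]%O.
have hm : forall i, z m0 <= z i.
  by move=> i; rewrite /m0; case: arg_minP => // j _ H; apply: H.
have mneg : z m0 < 0 by apply: le_lt_trans (hm k) zk.
pose psi i : R := (z i == z m0)%:R.
have key : forall i, z i = z m0 -> 
    \sum_j P i j * z m0 + \sum_j P i j * (z j - z m0) <= z m0.
  move=> i zi; rewrite -big_split /=.
  have nT : ~~ T i by apply/negP => /hT; rewrite zi leNgt mneg.
  have := hk i nT; rewrite zi; apply: le_trans; apply: ler_sum => j _.
  by rewrite -mulrDr addrC subrK.
have sge : forall i, (\sum_j P i j) * z m0 >= z m0.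
  move=> i; rewrite -subr_ge0 -{2}(mul1r (z m0)) -mulrBl.
  apply: mulr_le0; [by rewrite subr_le0 | exact: ltW].
have rest : forall i, 0 <= \sum_j P i j * (z j - z m0).
  move=> i; apply: sumr_ge0 => j _; apply: mulr_ge0 => //.
  by rewrite subr_ge0.
have := @irr_psi psi; move=> /(_ _ m0); rewrite /psi eqxx => H.
suff: (1 : R) = 0 by move/eqP; rewrite oner_eq0.
apply: H => v [[i [-> _]]|[[i [-> hi]]|[i [j [-> hij]]]]].
- by rewrite fpsi_unit /psi ler0n.
- rewrite fpsiN fpsi_unit /psi oppr_ge0; case: eqP => zi; last by [].
  exfalso; have := key i zi; rewrite -big_distrl /=.
  have p0pos : 0 < p0 P i by move: hi; rewrite pmulr_rgt0.
  have := rest i; have := sge i; move: p0pos; rewrite p0E.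
  move: mneg; set S := \sum_j P i j; set Q := \sum_j _ * _; nra.
- rewrite fpsiD fpsiN !fpsi_unit /psi subr_ge0.
  case: (eqVneq (z i) (z m0)) => zi; last by rewrite ler0n.
  suff -> : z j = z m0 by rewrite eqxx.
  have pij : 0 < P i j by move: hij; rewrite pmulr_rgt0.
  have := key i zi; rewrite -big_distrl /= => h1.
  have h2 : P i j * (z j - z m0) <= \sum_j P i j * (z j - z m0).
    rewrite (bigD1 j) //= lerDl; apply: sumr_ge0 => l _.
    by apply: mulr_ge0 => //; rewrite subr_ge0.
  have := sge i; have := hm j; move: h1 h2 pij.
  set S := \sum_j P i j; set Q := \sum_j _ * _; move=> h1 h2 pij h3 h4.
  apply/eqP; rewrite eq_le h3 andbT; nra.
Qed.

Lemma Aunit : (1%:M - P) \in unitmx.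
Proof.
rewrite unitmxE unitfE; apply/negP => /eqP hd.
have : \det (1%:M - P)^T == 0 by rewrite det_tr hd.
case/det0P => v vn0 hv; move/eqP: vn0; apply.
have hz : forall i, \sum_j P i j * v 0 j = v 0 i.
  move=> i; have := congr1 (fun M : 'rV_d => M 0 i) hv; rewrite !mxE.
  under eq_bigr do rewrite !mxE.
  under eq_bigr do rewrite mulrBr.
  rewrite sumrB (bigD1 i) //= big1 => [|j hj]; last by rewrite eq_sym (negbTE hj) mulr0.
  rewrite eqxx mulr1 addr0 => /eqP; rewrite subr_eq0 => /eqP ->.
  by apply: eq_bigr => j _; rewrite mulrC.
have h1 := @minp pred0 (fun j => v 0 j) (fun _ => ltac:(done)) (fun k _ => ltac:(by rewrite hz)).
have h2 : forall k, 0 <= - v 0 k.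
  apply: (@minp pred0 (fun j => - v 0 j)) => // k _.
  have E : \sum_j P k j * - v 0 j = - v 0 k.
    rewrite -(hz k) -sumrN; apply: congr_big => // j _; by rewrite mulrN.
  by rewrite E.
apply/matrixP => i j; rewrite mxE ord1; apply/eqP; rewrite eq_le h1.
by have := h2 j; rewrite oppr_ge0 => ->.
Qed.

Local Notation G := (invmx (1%:M - P)).

Lemma Gcol i j : G i j = (i == j)%:R + \sum_k P i k * G k j.
Proof.
have := congr1 (fun M : 'M_d => M i j) (mulmxV Aunit).
rewrite mulmxBl mul1mx !mxE => <-; rewrite subrK.
by [].
Qed.

Lemma Grow i j : G i j = (i == j)%:R + \sum_k G i k * P k j.
Proof.
have := congr1 (fun M : 'M_d => M i j) (mulVmx Aunit).
rewrite mulmxBr mulmx1 !mxE => <-; rewrite subrK.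
by [].
Qed.

Lemma G_ge0 i j : 0 <= G i j.
Proof.
apply: (@minp pred0 (fun k => G k j)) => // k _.
by rewrite [leRHS]Gcol lerDr ler0n.
Qed.

Lemma G_le_diag j k : G j k <= G k k.
Proof.
rewrite -subr_ge0.
apply: (@minp (pred1 k) (fun j => G k k - G j k)) => [l /eqP ->|l hl]; first by rewrite subrr.
rewrite [in leRHS](Gcol l k) (negbTE (hl : l != k)) add0r.
have -> : \sum_j0 P l j0 * (G k k - G j0 k) = (\sum_j0 P l j0) * G k k - \sum_j0 P l j0 * G j0 k.
  by rewrite big_distrl -sumrB; apply: eq_bigr => m _; rewrite mulrBr.
rewrite lerD2r ler_piMl //; exact: G_ge0.
Qed.

Lemma G_cross l j k : G j l * G l k <= G l l * G j k.
Proof.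
rewrite -subr_ge0.
apply: (@minp (pred1 l) (fun j => G l l * G j k - G j l * G l k)) => [m /eqP ->|m hm].
  by rewrite subrr.
rewrite [in leRHS](Gcol m k) [in leRHS](Gcol m l) (negbTE (hm : m != l)) add0r.
have -> : \sum_j0 P m j0 * (G l l * G j0 k - G j0 l * G l k) =
   G l l * \sum_j0 P m j0 * G j0 k - (\sum_j0 P m j0 * G j0 l) * G l k.
  rewrite big_distrr big_distrl -sumrB; apply: eq_bigr => q _.
  by rewrite /=; ring.
rewrite mulrDr lerD2r -{1}(add0r (_ * \sum_j0 _)) lerD2r.
by apply: mulr_ge0; [exact: G_ge0| rewrite ler0n].
Qed.

Lemma G_cross_diag l k : k != l -> G l l <= G l l * G k k - G k l * G l k.
Proof.
move=> hkl; set z := fun j => G l l * G j k - G j l * G l k.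
have zge0 : forall j, 0 <= z j by move=> j; rewrite subr_ge0 G_cross.
have : z k = G l l + \sum_j P k j * z j.
  rewrite /z [in LHS](Gcol k k) [in LHS](Gcol k l) (negbTE hkl) eqxx add0r mulrDr mulr1.
  rewrite -addrA; congr (_ + _).
  rewrite big_distrr big_distrl -sumrB; apply: eq_bigr => q _.
  by rewrite /=; ring.
rewrite /z => ->; rewrite lerDl; apply: sumr_ge0 => j _; apply: mulr_ge0 => //; exact: zge0.
Qed.

Lemma G_diag_ge1 k : 1 <= G k k.
Proof.
rewrite Gcol eqxx lerDl; apply: sumr_ge0 => j _; apply: mulr_ge0 => //; exact: G_ge0.
Qed.

Variable nu : 'I_d -> R.
Hypothesis hnu : forall j, nu j = lam j + \sum_i nu i * P i j.
Hypothesis hlam : forall i, 0 <= lam i.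

Lemma nuG k : nu k = \sum_j lam j * G j k.
Proof.
have e : forall j, lam j = nu j - \sum_i nu i * P i j.
  by move=> j; rewrite [nu j]hnu addrK.
under eq_bigr do rewrite e mulrBl big_distrl /=.
rewrite sumrB exchange_big /=.
have -> : \sum_i \sum_j nu i * P i j * G j k = \sum_i nu i * \sum_j P i j * G j k.
  by apply: eq_bigr => i _; rewrite big_distrr; apply: eq_bigr => j _; rewrite -mulrA.
rewrite -sumrB.
under eq_bigr => i _ do rewrite -mulrBr {1}(Gcol i k) addrK.
rewrite (bigD1 k) //= eqxx mulr1 big1 ?addr0 // => i hi.
by rewrite (negbTE hi) mulr0.
Qed.

Lemma nu_ge0 k : 0 <= nu k.
Proof. rewrite nuG; apply: sumr_ge0 => j _; apply: mulr_ge0 => //; exact: G_ge0. Qed.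

Lemma nu_gt0 k : 0 < nu k.
Proof.
rewrite lt_neqAle nu_ge0 andbT eq_sym; apply/negP => /eqP hk0.
have terms : forall i, lam i * G i k = 0.
  move=> i; apply/eqP; rewrite eq_le; apply/andP; split; last first.
    by apply: mulr_ge0 => //; exact: G_ge0.
  rewrite -hk0 nuG (bigD1 i) //= lerDl; apply: sumr_ge0 => j _.
  by apply: mulr_ge0 => //; exact: G_ge0.
pose psi j : R := - ((0 < G j k)%R : nat)%:R.
have := @irr_psi psi; move=> /(_ _ k); rewrite /psi.
have -> : 0 < G k k by apply: lt_le_trans (G_diag_ge1 k).
suff H : forall v, is_jump lam mu P v -> 0 <= fpsi psi v.
  by move=> /(_ H) /eqP; rewrite oppr_eq0 oner_eq0.
move=> v [[i [-> hi]]|[[i [-> hi]]|[i [j [-> hij]]]]].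
- rewrite fpsi_unit /psi oppr_ge0.
  have : G i k = 0 by have := terms i; move/eqP; rewrite mulf_eq0 gt_eqF //= => /eqP.
  by move=> ->; rewrite ltxx.
- by rewrite fpsiN fpsi_unit /psi opprK ler0n.
- rewrite fpsiD fpsiN !fpsi_unit /psi opprK addrC subr_ge0.
  case: (ltP 0 (G i k)) => hik; first by case: (0 < G j k).
  have pij : 0 < P i j by move: hij; rewrite pmulr_rgt0.
  have ik : i != k.
    by apply/eqP => e; move: hik; rewrite e leNgt (lt_le_trans ltr01 (G_diag_ge1 k)).
  have : P i j * G j k <= 0.
    apply: le_trans hik; rewrite (Gcol i k) (negbTE ik) add0r (bigD1 j) //= lerDl.
    by apply: sumr_ge0 => l _; apply: mulr_ge0 => //; exact: G_ge0.
  rewrite pmulr_rle0 // leNgt => /negbTE ->; exact: lexx.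
Qed.
End Irr.

Section Lag.
Variables (R : realType) (d : nat) (lam : 'I_d -> R) (P : 'M[R]_d).
Hypotheses (hlam : forall i, 0 <= lam i) (hPpos : forall i j, 0 <= P i j)
  (hProw : forall i, \sum_j P i j <= 1).

Definition gfun (a : 'I_d -> R) i :=
  \sum_j P i j * expR (a j - a i) + p0 P i * expR (- a i) - 1.
Definition Lc (c a : 'I_d -> R) :=
  \sum_i c i * gfun a i + \sum_i lam i * (expR (a i) - 1).

Lemma Rfun_Lc mu a : Rfun lam mu P a = Lc mu a.
Proof. by []. Qed.

Lemma Lc_decomp mu c a : Lc mu a = Lc c a + \sum_i (mu i - c i) * gfun a i.
Proof.
rewrite /Lc [RHS]addrAC; congr (_ + _); rewrite -big_split; apply: eq_bigr => i _ /=.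
by rewrite -mulrDl addrC subrK.
Qed.

Lemma p0_ge0 i : 0 <= p0 P i.
Proof. by rewrite /p0 subr_ge0. Qed.

Lemma gfunE a i :
  gfun a i = (\sum_j P i j * expR (a j) + p0 P i - expR (a i)) / expR (a i).
Proof.
have hne : expR (a i) != 0 by rewrite gt_eqF // expR_gt0.
have e1 : \sum_j P i j * expR (a j - a i) = (\sum_j P i j * expR (a j)) / expR (a i).
  by rewrite big_distrl; apply: eq_bigr => j _; rewrite expRD expRN mulrA.
by rewrite /gfun e1 expRN; field.
Qed.

Lemma expR_tan (u v : R) : expR v * (1 + (u - v)) <= expR u.
Proof.
have -> : expR u = expR v * expR (u - v) by rewrite -expRD addrC subrK.
by apply: ler_wpM2l; [exact: ltW (expR_gt0 _)| exact: expR_ge1Dx].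
Qed.

Lemma tangent (x y : 'I_d -> R) (hx : forall i, 0 < x i) (hy : forall i, 0 <= y i)
  (bal : forall m, x m * (\sum_i y i * P i m + lam m) =
                   y m * (\sum_j P m j * x j + p0 P m)) a :
  Lc (fun i => x i * y i) (fun i => ln (x i)) <= Lc (fun i => x i * y i) a.
Proof.
have ex : forall i, expR (ln (x i)) = x i by move=> i; apply/eqP; rewrite lnK_eq.
have xne : forall i, x i != 0 by move=> i; rewrite gt_eqF.
set dl := fun i => a i - ln (x i).
have Lb : Lc (fun i => x i * y i) (fun i => ln (x i)) =
   \sum_i (\sum_j y i * P i j * x j + y i * p0 P i - x i * y i)
   + \sum_i (lam i * x i - lam i).
  rewrite /Lc; congr (_ + _); apply: eq_bigr => i _; last by rewrite ex mulrBr mulr1.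
  rewrite gfunE !ex; under eq_bigr do rewrite ex.
  rewrite [LHS](_ : _ = y i * (\sum_j P i j * x j + p0 P i - x i)); last by field.
  rewrite mulrBr mulrDr big_distrr /= (mulrC (y i) (x i)); congr (_ + _ - _).
  by apply: eq_bigr => j _; rewrite mulrA.
have La : Lc (fun i => x i * y i) a >=
   \sum_i (\sum_j y i * P i j * x j * (1 + (dl j - dl i)) + y i * p0 P i * (1 - dl i) - x i * y i)
   + \sum_i (lam i * x i * (1 + dl i) - lam i).
  rewrite /Lc; apply: lerD; apply: ler_sum => i _; last first.
    rewrite mulrBr mulr1 lerD2r -mulrA ler_wpM2l // -(ex i) /dl; exact: expR_tan.
  rewrite /gfun [in leRHS]mulrBr mulr1 lerD2r [in leRHS]mulrDr big_distrr /=; apply: lerD.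
    apply: ler_sum => j _.
    rewrite [leLHS](_ : _ = (y i * P i j) * (x j * (1 + (dl j - dl i)))); last by ring.
    rewrite [leRHS](_ : _ = (y i * P i j) * (x i * expR (a j - a i))); last by ring.
    apply: ler_wpM2l; first by apply: mulr_ge0.
    have -> : x j * (1 + (dl j - dl i)) = x i * (expR (ln (x j) - ln (x i)) *
                 (1 + ((a j - a i) - (ln (x j) - ln (x i))))).
      rewrite expRD expRN !ex /dl; field; exact: xne.
    apply: ler_wpM2l; first exact: ltW.
    exact: expR_tan.
  rewrite (mulrC (x i)) -mulrA -mulrA; apply: ler_wpM2l; first exact: hy.
  rewrite mulrCA; apply: ler_wpM2l; first exact: p0_ge0.
  have -> : 1 - dl i = x i * (expR (- ln (x i)) * (1 + (- a i - - ln (x i)))).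
    rewrite expRN ex /dl; field; exact: xne.
  apply: ler_wpM2l; first exact: ltW.
  exact: expR_tan.
apply: le_trans La; rewrite Lb le_eqVlt; apply/orP; left; apply/eqP.
have eqi : forall i,
   \sum_j y i * P i j * x j * (1 + (dl j - dl i)) + y i * p0 P i * (1 - dl i) - x i * y i
   = (\sum_j y i * P i j * x j + y i * p0 P i - x i * y i)
     + \sum_j y i * P i j * x j * dl j - dl i * (y i * (\sum_j P i j * x j + p0 P i)).
  move=> i.
  have -> : \sum_j y i * P i j * x j * (1 + (dl j - dl i)) =
     \sum_j y i * P i j * x j + \sum_j y i * P i j * x j * dl j
       - (dl i * y i) * \sum_j P i j * x j.
    rewrite big_distrr -big_split -sumrB /=; apply: eq_bigr => j _; ring.
  ring.
rewrite (eq_bigr _ (fun i _ => eqi i)).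
rewrite !big_split /=.
have ex2 : \sum_i \sum_j y i * P i j * x j * dl j =
           \sum_m dl m * (x m * \sum_i y i * P i m).
  rewrite exchange_big /=; apply: eq_bigr => m _; rewrite !big_distrr /=.
  by apply: eq_bigr => i _; ring.
have lam2 : \sum_i lam i * x i * (1 + dl i) =
            \sum_i lam i * x i + \sum_m dl m * (lam m * x m).
  rewrite -big_split /=; apply: eq_bigr => i _; ring.
rewrite ex2 lam2.
set A := \sum_m _ * (x m * _); set B := \sum_m _ * (lam m * x m).
set C := \sum_i - (dl i * (y i * _)).
have -> : C = - (A + B).
  rewrite /A /B /C sumrN -big_split /=; congr (- _); apply: eq_bigr => m _.
  by rewrite -mulrDr (mulrC (lam m)) -mulrDr bal.
ring.
Qed.

Lemma gfun_ln (x : 'I_d -> R) (hx : forall i, 0 < x i) k :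
  gfun (fun k => ln (x k)) k = (\sum_j P k j * x j + p0 P k - x k) / x k.
Proof.
have ex : forall i, expR (ln (x i)) = x i by move=> i; apply/eqP; rewrite lnK_eq.
rewrite gfunE ex; congr ((_ + _ - _) / _); apply: eq_bigr => j _; by rewrite ex.
Qed.

Lemma finish mu (x y : 'I_d -> R) (hx : forall i, 0 < x i) (hy : forall i, 0 <= y i)
  (bal : forall m, x m * (\sum_i y i * P i m + lam m) =
                   y m * (\sum_j P m j * x j + p0 P m)) (a : 'I_d -> R) (i : 'I_d) :
  (forall k, 0 <= (mu k - x k * y k) * gfun a k) ->
  0 < (mu i - x i * y i) * gfun a i ->
  (forall k, (mu k - x k * y k) * gfun (fun k => ln (x k)) k = 0) ->
  Rfun lam mu P (fun k => ln (x k)) < Rfun lam mu P a.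
Proof.
move=> hk hi h0.
rewrite !Rfun_Lc (Lc_decomp mu (fun k => x k * y k)) (Lc_decomp mu (fun k => x k * y k) a).
rewrite big1 ?addr0; last by move=> k _; apply: h0.
have T := @tangent x y hx hy bal a.
have S : 0 < \sum_k (mu k - x k * y k) * gfun a k.
  rewrite (bigD1 i) //=.
  have : 0 <= \sum_(k | k != i) (mu k - x k * y k) * gfun a k.
    by apply: sumr_ge0 => k _; exact: hk.
  move: hi; lra.
move: T S; lra.
Qed.

Lemma gfun_ge0 a k : expR (a k) <= \sum_j P k j * expR (a j) + p0 P k -> 0 <= gfun a k.
Proof.
move=> h; rewrite gfunE; apply: divr_ge0; [by rewrite subr_ge0 | exact: ltW (expR_gt0 _)].
Qed.

Lemma gfun_eq0 a k : Jset P a k -> gfun a k = 0.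
Proof. by rewrite gfunE /Jset => <-; rewrite subrr mul0r. Qed.

Lemma gfun_gt0 a k : expR (a k) <= \sum_j P k j * expR (a j) + p0 P k -> ~ Jset P a k ->
  0 < gfun a k.
Proof.
move=> h nJ; rewrite gfunE; apply: divr_gt0; last exact: expR_gt0.
rewrite subr_gt0 lt_neqAle h andbT; apply/negP => /eqP e; apply: nJ; by rewrite /Jset e.
Qed.
End Lag.

Lemma sq_bound (R : realType) (p q X Y : R) : 0 <= p -> 0 <= q -> p <= X -> p <= Y ->
  q <= X -> q <= Y -> (p + q) ^+ 2 <= 4 * (X * Y).
Proof.
move=> p0 q0 pX pY qX qY.
case: (lerP X Y) => XY.
  have h1 : (p + q) ^+ 2 <= (X + X) ^+ 2.
    by rewrite !expr2; apply: ler_pM; [apply: addr_ge0|apply: addr_ge0|apply: lerD|apply: lerD].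
  apply: le_trans h1 _; nra.
have h1 : (p + q) ^+ 2 <= (Y + Y) ^+ 2.
  by rewrite !expr2; apply: ler_pM; [apply: addr_ge0|apply: addr_ge0|apply: lerD|apply: lerD].
apply: le_trans h1 _; nra.
Qed.

Lemma crux (R : realType) (g h a b t s0 sk Dk : R) : 0 < g -> 0 <= a -> a <= g ->
  0 <= b -> b <= h -> g <= h * g - a * b -> a * sk ^+ 2 <= h * s0 ^+ 2 ->
  b * s0 ^+ 2 <= g * sk ^+ 2 -> 0 < t -> 0 < s0 -> 0 <= sk -> 0 < Dk ->
  h * g * s0 ^+ 2 * t ^+ 2 <= Dk ^+ 2 ->
  (1 + t * a) * (sk ^+ 2 + s0 ^+ 2 * t * b) < (sk + Dk) ^+ 2.
Proof.
move=> g0 a0 ag b0 bh hab h1 h2 t0 s00 sk0 D0 hD.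
have h0 : 0 <= h by apply: le_trans bh.
have p0 : 0 <= a * sk ^+ 2 by apply: mulr_ge0 => //; apply: sqr_ge0.
have q0 : 0 <= b * s0 ^+ 2 by apply: mulr_ge0 => //; apply: sqr_ge0.
have st1' := @sq_bound R _ _ _ _ p0 q0 (ler_wpM2r (sqr_ge0 sk) ag) h1 h2 (ler_wpM2r (sqr_ge0 s0) bh).
have st2 : t * (a * sk ^+ 2 + b * s0 ^+ 2) <= 2 * sk * Dk.
  have hp : 0 <= t * (a * sk ^+ 2 + b * s0 ^+ 2) by apply: mulr_ge0; [exact: ltW|exact: addr_ge0].
  have hq : 0 <= 2 * sk * Dk by apply: mulr_ge0; [apply: mulr_ge0|exact: ltW].
  rewrite -(ler_pXn2r (n := 2)) // ?nnegrE //.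
  have : (t * (a * sk ^+ 2 + b * s0 ^+ 2)) ^+ 2 <= t ^+ 2 * (4 * (g * sk ^+ 2 * (h * s0 ^+ 2))).
    by rewrite exprMn; apply: ler_wpM2l => //; apply: sqr_ge0.
  move=> H; apply: le_trans H _.
  have : sk ^+ 2 * (h * g * s0 ^+ 2 * t ^+ 2) <= sk ^+ 2 * Dk ^+ 2.
    by apply: ler_wpM2l => //; apply: sqr_ge0.
  move=> H2; rewrite exprMn (exprMn 2) ; nra.
have st3 : t ^+ 2 * a * b * s0 ^+ 2 < Dk ^+ 2.
  apply: lt_le_trans hD.
  have ts : 0 < t ^+ 2 * s0 ^+ 2 by apply: mulr_gt0; apply: exprn_gt0.
  have : t ^+ 2 * s0 ^+ 2 * (a * b) < t ^+ 2 * s0 ^+ 2 * (h * g).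
    by rewrite ltr_pM2l //; lra.
  have E1 : t ^+ 2 * a * b * s0 ^+ 2 = t ^+ 2 * s0 ^+ 2 * (a * b) by ring.
  have E2 : t ^+ 2 * s0 ^+ 2 * (h * g) = h * g * s0 ^+ 2 * t ^+ 2 by ring.
  by rewrite E1 -E2.
nra.
Qed.


Theorem lemma8p1 (R : realType) (n : nat) (lam mu nu : 'I_n.+1 -> R)
  (P : 'M[R]_n.+1)
  (hlam : forall i, 0 <= lam i) (hmu : forall i, 0 < mu i)
  (hPpos : forall i j, 0 <= P i j) (hPdiag : forall i, P i i = 0)
  (hProw : forall i, \sum_j P i j <= 1)
  (hA : jackson_irreducible lam mu P)
  (hnu : forall j, nu j = lam j + \sum_i nu i * P i j)
  (hB : forall i, nu i < mu i)
  (hmin : forall i, gap mu nu P ord0 <= gap mu nu P i)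
  (a : 'I_n.+1 -> R) (ha : Bset P ord0 a) :
  forall i : 'I_n.+1, i != ord0 -> ~ Jset P a i ->
    exists a' : 'I_n.+1 -> R,
      [/\ Bset P ord0 a',
          (forall k, Jset P a k \/ k = i -> Jset P a' k) &
          Rfun lam mu P a' < Num.max (Rfun lam mu P a) (- gap mu nu P i)].
Proof.
move=> i i0 nJi.
pose G := invmx (1%:M - P).
have Gc := @Gcol _ _ _ _ _ hA hmu hPpos hProw.
have Gr := @Grow _ _ _ _ _ hA hmu hPpos hProw.
have G0 := @G_ge0 _ _ _ _ _ hA hmu hPpos hProw.
have Gld := @G_le_diag _ _ _ _ _ hA hmu hPpos hProw.
have Gx := @G_cross _ _ _ _ _ hA hmu hPpos hProw.
have Gxd := @G_cross_diag _ _ _ _ _ hA hmu hPpos hProw.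
have G1 := @G_diag_ge1 _ _ _ _ _ hA hmu hPpos hProw.
have nG := @nuG _ _ _ _ _ hA hmu hPpos hProw nu hnu.
have n0 := @nu_ge0 _ _ _ _ _ hA hmu hPpos hProw nu hnu hlam.
have npos := @nu_gt0 _ _ _ _ _ hA hmu hPpos hProw nu hnu hlam.
have gA : forall k, k != ord0 -> 0 <= gfun R _ P a k.
  by move=> k hk; apply: gfun_ge0; exact: ha.
have gi : 0 < gfun R _ P a i by apply: gfun_gt0 => //; exact: ha.
have Jln : forall x : 'I_n.+1 -> R, (forall k, 0 < x k) ->
    forall k, x k = \sum_j P k j * x j + p0 P k -> Jset P (fun k => ln (x k)) k.
  move=> x hx k e.
  have ex : forall i, expR (ln (x i)) = x i by move=> j; apply/eqP; rewrite lnK_eq.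
  by rewrite /Jset; under eq_bigr do rewrite ex; rewrite ex.
have sum1 : forall k, \sum_j P k j * 1 + p0 P k = 1.
  by move=> k; rewrite /p0; under eq_bigr do rewrite mulr1; rewrite addrC subrK.
case: (eqVneq (expR (a ord0)) (\sum_j P ord0 j * expR (a j) + p0 P ord0)) => [J0|nJ0].
  have Jall : forall k, Jset P (fun k => ln ((fun _ : 'I_n.+1 => (1 : R)) k)) k.
    by move=> k; apply: Jln => // k'; rewrite sum1.
  exists (fun k => ln ((fun _ : 'I_n.+1 => (1 : R)) k)); split.
  - by move=> k _; rewrite [leLHS](Jall k).
  - by move=> k _; exact: Jall.
  rewrite lt_max; apply/orP; left.
  apply: (@finish _ _ lam P hlam hPpos hProw mu (fun _ => 1) nu _ _ _ a i) => //.
  - by move=> m; rewrite mul1r sum1 mulr1 [RHS]hnu addrC.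
  - move=> k; case: (eqVneq k ord0) => [->|hk].
      by rewrite (@gfun_eq0 _ _ P a ord0 J0) mulr0.
    by apply: mulr_ge0; [rewrite /= mul1r subr_ge0 ltW|exact: gA].
  - by apply: mulr_gt0 => //; rewrite mul1r subr_gt0.
  - by move=> k; rewrite (@gfun_eq0 _ _ P _ k (Jall k)) mulr0.
set o : 'I_n.+1 := ord0.
set s0 := Num.sqrt (nu o); set m0 := Num.sqrt (mu o); set g := G o o.
have s0p : 0 < s0 by rewrite sqrtr_gt0.
have m0s0 : s0 < m0 by rewrite ltr_sqrt.
have gp : 0 < g by apply: lt_le_trans ltr01 (G1 o).
set t := (m0 - s0) / (s0 * g).
have tp : 0 < t by apply: divr_gt0; [rewrite subr_gt0|exact: mulr_gt0].
pose x k := 1 + t * G k o.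
pose y k := nu k + nu o * t * G o k.
have hx : forall k, 0 < x k.
  move=> k; apply: lt_le_trans ltr01 _; rewrite lerDl; apply: mulr_ge0 => //; exact: ltW.
have hy : forall k, 0 <= y k.
  move=> k; apply: addr_ge0 => //; apply: mulr_ge0 => //; apply: mulr_ge0 => //; exact: ltW.
have nus : nu o = s0 ^+ 2 by rewrite sqr_sqrtr // ltW.
have mus : mu o = m0 ^+ 2 by rewrite sqr_sqrtr // ltW.
have xyo : x o * y o = mu o.
  rewrite /x /y -/g mus nus /t; field.
  by apply/andP; split; apply: lt0r_neq0.
have Jx : forall k, k != o -> x k = \sum_j P k j * x j + p0 P k.
  move=> k hk; rewrite /x /p0.
  have E : \sum_j P k j * (1 + t * G j o) = \sum_j P k j + t * \sum_j P k j * G j o.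
    rewrite big_distrr -big_split /=; apply: eq_bigr => j _; ring.
  rewrite E; have := Gc k o; rewrite -/G (negbTE hk) add0r => <-; ring.
have bal : forall m, x m * (\sum_i0 y i0 * P i0 m + lam m) =
                     y m * (\sum_j P m j * x j + p0 P m).
  move=> m.
  have E1 : \sum_i0 y i0 * P i0 m = (nu m - lam m) + nu o * t * (G o m - (o == m)%:R).
    have := Gr o m; rewrite -/G => e.
    rewrite /y; under eq_bigr do rewrite mulrDl -mulrA.
    rewrite big_split /= -big_distrr /= [nu m]hnu e; ring.
  have E2 : \sum_j P m j * x j + p0 P m = 1 + t * (G m o - (m == o)%:R).
    have := Gc m o; rewrite -/G => e.
    have E : \sum_j P m j * (1 + t * G j o) = \sum_j P m j + t * \sum_j P m j * G j o.
      rewrite big_distrr -big_split /=; apply: eq_bigr => j _; ring.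
    rewrite /x E /p0 e; ring.
  rewrite E1 E2 /x /y.
  by case: (eqVneq m o) => [->|hm]; rewrite /= ?mulr1n ?mulr0n; ring.

have cx : forall k, k != o -> x k * y k < mu k.
  move=> k hk.
  set sk := Num.sqrt (nu k); set Dk := Num.sqrt (mu k) - sk.
  have nuk : nu k = sk ^+ 2 by rewrite sqr_sqrtr.
  have muk : mu k = (sk + Dk) ^+ 2 by rewrite /Dk addrC subrK sqr_sqrtr // ltW.
  have hDk : 0 < Dk by rewrite subr_gt0 ltr_sqrt.
  have hkk : 0 < G k k by apply: lt_le_trans ltr01 (G1 k).
  have hD : G k k * g * s0 ^+ 2 * t ^+ 2 <= Dk ^+ 2.
    have := hmin k; rewrite /gap /Gmx -/G -/o -/s0 -/m0 -/g -/sk -/Dk.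
    have -> : (m0 - s0) ^+ 2 / g = g * s0 ^+ 2 * t ^+ 2.
      rewrite /t; field; by apply/andP; split; apply: lt0r_neq0.
    rewrite ler_pdivlMr // => H; apply: le_trans H.
    by rewrite le_eqVlt; apply/orP; left; apply/eqP; ring.
  have hab : g <= G k k * g - G k o * G o k.
    by have := Gxd o k hk; rewrite -/G -/g [g * _]mulrC.
  have h1 : G k o * sk ^+ 2 <= G k k * s0 ^+ 2.
    rewrite -nuk -nus !nG !big_distrr; apply: ler_sum => j _.
    rewrite /= mulrCA [G k k * _]mulrCA; apply: ler_wpM2l => //.
    by rewrite mulrC; exact: Gx.
  have h2 : G o k * s0 ^+ 2 <= g * sk ^+ 2.
    rewrite -nuk -nus !nG !big_distrr; apply: ler_sum => j _.
    rewrite /= mulrCA [g * _]mulrCA; apply: ler_wpM2l => //.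
    by rewrite mulrC; exact: Gx.
  have := @crux R g (G k k) (G k o) (G o k) t s0 sk Dk gp (G0 k o) (Gld k o)
             (G0 o k) (Gld o k) hab h1 h2 tp s0p (sqrtr_ge0 _) hDk hD.
  by rewrite -nuk -nus -muk /x /y; rewrite -!mulrA.
exists (fun k => ln (x k)); split.
- by move=> k hk; rewrite [leLHS](Jln x hx k (Jx k hk)).
- move=> k hk; apply: Jln => //; apply: Jx.
  case: hk => [Jk|->] //; apply/eqP => e; move: nJ0; rewrite -/o -e.
  by rewrite Jk eqxx.
rewrite lt_max; apply/orP; left.
apply: (@finish _ _ lam P hlam hPpos hProw mu x y hx hy bal a i).
- move=> k; case: (eqVneq k o) => [->|hk]; first by rewrite xyo subrr mul0r.
  by apply: mulr_ge0; [rewrite subr_ge0 ltW // cx|exact: gA].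
- by apply: mulr_gt0 => //; rewrite subr_gt0 cx.
- move=> k; case: (eqVneq k o) => [->|hk]; first by rewrite xyo subrr mul0r.
  by rewrite (@gfun_eq0 _ _ P _ k (Jln x hx k (Jx k hk))) mulr0.
Qed.
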